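(* Let $k\in\mathbb{N}$, let $q>1$, and let $\tilde\chi_q$ be a modified character modulo $q$. Let $I_k=\{n+1,\dots,n+k\}$ (with $n\ge0$) be a block of $k$ consecutive positive integers and let $r=\#\{m\in I_k:\tilde\chi_q(m)=-1\}$. Let $P_r=\{p_1,\dots,p_r\}$ be any set of $r$ distinct primes with $p_i>k$ and $p_i\nmid q$ for all $i$, and define $f(m)=\tilde\chi_q(m)\lambda_{P_r}(m)$. Then there exists $n'\in\mathbb{N}\cup\{0\}$ such that $f(n'+1)=f(n'+2)=\cdots=f(n'+k)=+1$.
   Context: For a real Dirichlet character $\chi_q$ modulo $q>1$, a modified character $\tilde\chi_q$ is the completely multiplicative function $\mathbb{N}\to\{+1,-1\}$ with $\tilde\chi_q(p)=\chi_q(p)$ for primes $p\nmid q$ and $\tilde\chi_q(p)=\eta(p)\in\{+1,-1\}$ (an arbitrary sign) for primes $p\mid q$. For a set $S$ of primes, $\lambda_S$ is the completely multiplicative function with $\lambda_S(p)=-1$ if $p\in S$ and $\lambda_S(p)=+1$ for primes $p\notin S$. *)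

(* Defs.v *)
From mathcomp Require Import all_boot all_order all_algebra.
Set Implicit Arguments. Unset Strict Implicit. Unset Printing Implicit Defensive.
Import Order.TTheory GRing.Theory Num.Theory.
Local Open Scope ring_scope.

Definition real_dirichlet_char (q : nat) (chi : nat -> int) : Prop :=
  [/\ chi 1%N = 1,
      (forall m n : nat, chi (m * n)%N = chi m * chi n),
      (forall n : nat, chi (n + q)%N = chi n),
      (forall n : nat, coprime n q -> chi n = 1 \/ chi n = -1) &
      (forall n : nat, ~~ coprime n q -> chi n = 0)].

Definition modchar (q : nat) (chi eta : nat -> int) (n : nat) : int :=
  \prod_(p <- primes n) (if (p %| q)%N then eta p else chi p) ^+ logn p n.

Definition lambdaS (S : seq nat) (n : nat) : int :=
  (-1) ^+ (\sum_(p <- S) logn p n)%N.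

(* Main.v *)
Require Import Defs.
From mathcomp Require Import all_boot all_order all_algebra zify.
Import GRing.Theory.

Definition hq (q : nat) (chi eta : nat -> int) (p : nat) : int :=
  if (p %| q)%N then eta p else chi p.

Lemma modcharB q chi eta B x : (0 < x)%N -> (x < B)%N ->
  modchar q chi eta x = (\prod_(p <- iota 0 B) hq q chi eta p ^+ logn p x)%R.
Proof.
move=> x0 xB; rewrite /modchar; symmetry.
rewrite (bigID (fun p => p \in primes x)) /= [X in (_ * X)%R]big1 ?mulr1; last first.
  move=> p /negbTE h; have -> : logn p x = 0%N by apply/eqP; rewrite -leqn0 leqNgt logn_gt0 h.
  by rewrite expr0.
rewrite -big_filter; apply: perm_big; apply: uniq_perm.
- by rewrite filter_uniq // iota_uniq.
- exact: primes_uniq.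
move=> p; rewrite mem_filter mem_iota /=; case E: (p \in primes x) => //=.
move: E; rewrite mem_primes => /and3P [_ _ d]; have := dvdn_leq x0 d; lia.
Qed.

Lemma modcharM q chi eta a b : (0 < a)%N -> (0 < b)%N ->
  modchar q chi eta (a * b) = (modchar q chi eta a * modchar q chi eta b)%R.
Proof.
move=> a0 b0.
have ab0 : (0 < a * b)%N by rewrite muln_gt0 a0.
rewrite !(@modcharB _ _ _ (a * b).+1) //; try (rewrite ltnS; apply: leq_pmulr || apply: leq_pmull; done).
rewrite -big_split /=; apply: eq_bigr => p _; by rewrite lognM // exprD.
Qed.

Lemma modchar_pm1 q chi eta x : real_dirichlet_char q chi ->
  (forall p : nat, prime p -> (p %| q)%N -> eta p = 1 \/ eta p = -1)%R ->
  (modchar q chi eta x = 1 \/ modchar q chi eta x = -1)%R.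
Proof.
move=> [c1 cM cP cC c0] he.
have : (modchar q chi eta x ^+ 2 == 1)%R.
  rewrite /modchar -prodrXl; apply/eqP; rewrite big_seq; apply: big1 => p.
  rewrite mem_primes => /and3P [pp _ _].
  rewrite -exprM mulnC exprM.
  have -> : (hq q chi eta p ^+ 2 = 1)%R; last by rewrite expr1n.
  rewrite /hq; case: ifP => pq.
    by case: (he p pp pq) => ->; rewrite ?expr1n ?sqrrN ?expr1n.
  have : coprime p q by rewrite prime_coprime // pq.
  by move/cC => [] ->; rewrite ?expr1n ?sqrrN ?expr1n.
by rewrite sqrf_eq1 => /orP [] /eqP ->; [left|right].
Qed.

Lemma chi_exp q chi p e : real_dirichlet_char q chi -> chi (p ^ e)%N = (chi p ^+ e)%R.
Proof.
move=> [c1 cM _ _ _]; elim: e => [|e IH]; first by rewrite expn0 expr0.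
by rewrite expnS cM IH exprS.
Qed.

Lemma modchar_cop q chi eta u : real_dirichlet_char q chi -> (0 < u)%N -> coprime u q ->
  modchar q chi eta u = chi u.
Proof.
move=> hc u0 cu; have [c1 cM _ _ _] := hc.
rewrite {2}(prod_prime_decomp u0) prime_decompE big_map.
rewrite (big_morph chi (id1 := 1%R) (op1 := *%R) cM c1) /modchar big_seq [RHS]big_seq.
apply: eq_bigr => p; rewrite mem_primes => /and3P [pp _ pu] /=.
rewrite (chi_exp _ _ _ _ hc) /hq; case: ifP => // pq.
have : coprime p q by apply: coprime_dvdl pu cu.
by rewrite prime_coprime // pq.
Qed.

Lemma chi_per q chi x j : real_dirichlet_char q chi -> chi (x + q * j)%N = chi x.
Proof.
move=> [_ _ cP _ _]; elim: j => [|j IH]; first by rewrite muln0 addn0.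
by rewrite mulnS addnCA addnC cP.
Qed.

Lemma modchar_shift q chi eta x D t : (0 < q)%N -> real_dirichlet_char q chi -> (0 < x)%N ->
  (x`_\pi(q) %| D)%N -> modchar q chi eta (x + q * D * t) = modchar q chi eta x.
Proof.
move=> q0 hc x0 /dvdnP [D' ->].
set d := x`_\pi(q); set u := x`_(\pi(q))^'.
have hx : (d * u = x)%N by rewrite partnC.
have d0 : (0 < d)%N by apply: part_gt0.
have u0 : (0 < u)%N by move: x0; rewrite -hx muln_gt0 => /andP [].
have cu : coprime u q.
  by rewrite coprime_sym; apply: (pnat_coprime (pnat_pi q0)); apply: part_pnat.
have -> : (x + q * (D' * d) * t = d * (u + q * (D' * t)))%N.
  rewrite -hx mulnDr; congr (_ + _)%N; lia.
transitivity (modchar q chi eta (d * u)); last by rewrite hx.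
rewrite !modcharM //; last by rewrite addn_gt0 u0.
congr (_ * _)%R; rewrite !modchar_cop //; first exact: chi_per.
  by rewrite addn_gt0 u0.
by rewrite -coprime_modl addnC mulnC modnMDl coprime_modl.
Qed.

Lemma solve1 p Q y : prime p -> coprime Q p -> exists t, (y + Q * t) %% p ^ 2 = p.
Proof.
move=> pp cQ.
have p1 := prime_gt1 pp.
have pp0 : 0 < p ^ 2 by rewrite expn_gt0 ltnW.
have [a _ ha] := Bezoutl Q pp0.
have g1 : gcdn (p ^ 2) Q = 1.
  by apply/eqP; rewrite -/(coprime (p ^ 2) Q) coprime_sym coprimeXr.
rewrite g1 in ha; have [c hc] := dvdnP ha.
set w := y + (p ^ 2 - p).
exists (a * w).
have pl : p < p ^ 2 by rewrite expnS expn1 -{1}(mul1n p) ltn_mul2r p1 (ltnW p1).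
have H : (y + Q * (a * w)) + w = p + w %[mod p ^ 2].
  have -> : y + Q * (a * w) + w = c * w * p ^ 2 + y.
    have -> : c * w * p ^ 2 = (1 + a * Q) * w by rewrite hc; lia.
    lia.
  have -> : p + w = 1 * p ^ 2 + y by rewrite /w; lia.
  by rewrite !modnMDl.
move/eqP: H; rewrite eqn_modDr => /eqP ->; exact: modn_small.
Qed.

Lemma logn_one p z : prime p -> z %% p ^ 2 = p -> logn p z = 1.
Proof.
move=> pp hz.
have p1 := prime_gt1 pp.
have -> : z = p * (z %/ p ^ 2 * p + 1).
  by rewrite {1}(divn_eq z (p ^ 2)) hz; lia.
rewrite lognM ?addn_gt0 ?orbT ?prime_gt0 // logn_prime // eqxx.
rewrite lognE; case: ifP => //= /and3P [_ _].
by rewrite dvdn_addr ?dvdn_mull // dvdn1 => /eqP h; rewrite h in p1.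
Qed.

Lemma dvd_of_mod p z : z %% p ^ 2 = p -> p %| z.
Proof.
move=> hz; have dp : p %| p ^ 2 by rewrite expnS dvdn_mulr.
rewrite /dvdn -(modn_dvdm z dp).
by rewrite hz modnn.
Qed.

Lemma logn_zero p z k b m : prime p -> p %| z + b -> k < p -> 1 <= b <= k -> 1 <= m <= k -> b != m ->
  logn p (z + m) = 0.
Proof.
move=> pp hb kp /andP [b1 bk] /andP [m1 mk] bm.
rewrite lognE; case: ifP => //= /and3P [_ _ hm]; exfalso.
case: (ltngtP b m) => [bm'|mb|e]; last by rewrite e eqxx in bm.
- have := dvdn_sub hm hb; rewrite subnDl => h.
  have := dvdn_leq _ h; rewrite subn_gt0 => /(_ bm'); lia.
- have := dvdn_sub hb hm; rewrite subnDl => h.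
  have := dvdn_leq _ h; rewrite subn_gt0 => /(_ mb); lia.
Qed.

Lemma crt (S : nat * nat -> nat -> Prop) (s : seq (nat * nat)) :
  uniq (unzip1 s) -> (forall pr, pr \in s -> prime pr.1) ->
  (forall pr, pr \in s -> exists t, S pr t) ->
  (forall pr t t', pr \in s -> t = t' %[mod pr.1 ^ 2] -> S pr t -> S pr t') ->
  exists t, forall pr, pr \in s -> S pr t.
Proof.
elim: s => [|a s IH]; first by exists 0.
rewrite /= => /andP [an us] hp hex hinv.
have [t1 ht1] : exists t, forall pr, pr \in s -> S pr t.
  apply: IH => // [pr prs|pr prs|pr t t' prs]; [apply: hp|apply: hex|apply: hinv];
  by rewrite inE prs orbT.
have [t0 ht0] := hex a (mem_head _ _).
set M := \prod_(x <- s) x.1 ^ 2.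
have cop : coprime (a.1 ^ 2) M.
  rewrite /M big_seq; apply big_ind => [|x y|x xs]; first exact: coprimen1.
    by move=> cx cy; rewrite coprimeMr cx.
  apply: coprimeXl; apply: coprimeXr.
  have pa := hp a (mem_head _ _); have px : prime x.1 by apply: hp; rewrite inE xs orbT.
  rewrite prime_coprime // dvdn_prime2 //; apply/eqP => e.
  by move: an; rewrite e (map_f fst xs).
exists (chinese (a.1 ^ 2) M t0 t1) => pr; rewrite inE => /orP [/eqP ->|prs].
  apply: (hinv a t0) => //; first exact: mem_head.
  by rewrite chinese_modl.
apply: (hinv pr t1) => //; first by rewrite inE prs orbT.
have dM : pr.1 ^ 2 %| M by rewrite /M (big_rem pr prs) /= dvdn_mulr.
rewrite -(modn_dvdm t1 dM) -(modn_dvdm (chinese _ _ _ _) dM) chinese_modr //.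
exact: ht1.
Qed.

Local Open Scope ring_scope.

Theorem lemma2p1 (k q : nat) (chi eta : nat -> int) (n : nat) (P : seq nat) :
  (1 < q)%N ->
  real_dirichlet_char q chi ->
  (forall p : nat, prime p -> (p %| q)%N -> eta p = 1 \/ eta p = -1) ->
  uniq P ->
  (forall p : nat, p \in P -> [/\ prime p, (k < p)%N & ~~ (p %| q)%N]) ->
  size P = count (fun m : nat => modchar q chi eta m == -1) (iota n.+1 k) ->
  exists n' : nat, forall m : nat, (1 <= m <= k)%N ->
    modchar q chi eta (n' + m) * lambdaS P (n' + m) = 1.
Proof.
move=> q1 hc he uP hP hsize.
have q0 : (0 < q)%N by apply: ltnW.
set F := fun m => modchar q chi eta (n + m) == -1.
set M := [seq m <- iota 1 k | F m].
have sM : size P = size M.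
  rewrite hsize size_filter -addn1 iotaDl count_map; apply: eq_count => x /=.
  by rewrite /F.
set s := zip P M.
have u1 : unzip1 s = P by rewrite unzip1_zip // sM.
have u2 : unzip2 s = M by rewrite unzip2_zip // sM.
have memP : forall pr, pr \in s -> pr.1 \in P by move=> pr h; rewrite -u1; apply: map_f.
have memM : forall pr, pr \in s -> pr.2 \in M by move=> pr h; rewrite -u2; apply: map_f.
set D := (\prod_(x <- iota n.+1 k) x`_\pi(q))%N.
set Q := (q * D)%N.
have cQ : forall p, p \in P -> coprime Q p.
  move=> p /hP [pp _ pq]; apply: (@pnat_coprime (\pi(q))).
    rewrite /Q pnatM pnat_pi //=; apply: (big_ind (fun y => \pi(q).-nat y)) => //.
      by move=> x y; rewrite pnatM => -> ->.
    by move=> x _; apply: part_pnat.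
  by rewrite pnatE // !inE /= mem_primes pp q0.
have [t ht] : exists t, forall pr, pr \in s -> ((n + Q * t + pr.2) %% pr.1 ^ 2 = pr.1)%N.
  apply: (@crt (fun pr t => (n + Q * t + pr.2) %% pr.1 ^ 2 = pr.1)%N s).
  - by rewrite u1.
  - by move=> pr /memP /hP [].
  - move=> pr /memP hp; have [pp _ _] := hP _ hp.
    have [t0 h0] := solve1 pr.1 Q (n + pr.2) pp (cQ _ hp).
    by exists t0; rewrite /= addnAC.
  - move=> pr t t' _ e /= h.
    transitivity ((n + Q * t + pr.2) %% pr.1 ^ 2)%N; last exact: h.
    rewrite addnAC [in RHS]addnAC.
    apply/eqP; rewrite eqn_modDl; apply/eqP.
    by rewrite -modnMmr -e modnMmr.
exists (n + Q * t)%N => m hm.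
have hsum : (\sum_(p <- P) logn p (n + Q * t + m))%N = (m \in M).
  rewrite -u1 big_map.
  rewrite (eq_big_seq (fun pr => nat_of_bool (pr.2 == m))); last first.
    move=> pr prs; have hp := memP _ prs; have [pp kp _] := hP _ hp.
    have hb : (1 <= pr.2 <= k)%N.
      by have := memM _ prs; rewrite mem_filter mem_iota => /andP [_]; lia.
    case: eqP => [<-|ne]; first by apply: logn_one => //; exact: ht.
    apply: (logn_zero pr.1 (n + Q * t)%N k pr.2 m pp _ kp hb hm); last by apply/eqP.
    by apply: dvd_of_mod; exact: ht.
  have uM : uniq M by rewrite filter_uniq ?iota_uniq.
  rewrite -(count_uniq_mem m uM) -u2 count_map.
  rewrite -sum1_count [RHS]big_mkcond; apply: eq_bigr => x _.
  by rewrite /= /preim /=; case: (x.2 == m).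
rewrite /lambdaS hsum.
have -> : (n + Q * t + m = (n + m) + q * D * t)%N by rewrite /Q addnAC.
rewrite modchar_shift //; last first.
  by rewrite /D (big_rem (n + m)%N) ?dvdn_mulr // mem_iota; lia.
  by lia.
have -> : (m \in M) = F m.
  rewrite mem_filter mem_iota.
  have -> : (1 <= m < 1 + k)%N by lia.
  by rewrite andbT.
case hF: (F m).
  by rewrite (eqP hF) /= expr1 mulrNN mulr1.
have := modchar_pm1 q chi eta (n + m) hc he; rewrite /F in hF.
by case => h; rewrite h ?eqxx in hF; rewrite h expr0 mulr1.
Qed.
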